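(* Let $R$ be a reflexive relation on $U$ such that $\mathrm{DM(RS)}$ is completely distributive. Let $x,y\in U\setminus\mathcal S$ be such that $\{x\}^{\blacktriangle}$ and $\{y\}^{\blacktriangle}$ are completely join-irreducible in $\wp(U)^{\blacktriangle}$. The following are equivalent: (i) there exists $u\in U$ with $\{x\}^{\blacktriangle},\{y\}^{\blacktriangle}\subseteq\{u\}^{\blacktriangle}$; (ii) each of $(\emptyset,\{x\}^{\blacktriangle})$ and $(\emptyset,\{y\}^{\blacktriangle})$ is below both $g(\emptyset,\{x\}^{\blacktriangle})$ and $g(\emptyset,\{y\}^{\blacktriangle})$ in $\mathrm{DM(RS)}$.
   Context: Let $U$ be a set and $R\subseteq U\times U$ a binary relation. For $x\in U$, $R(x)=\{y\in U\mid (x,y)\in R\}$ and $\breve R(x)=\{y\in U\mid (y,x)\in R\}$. For $X\subseteq U$: $X^{\blacktriangledown}=\{x\in U\mid R(x)\subseteq X\}$, $X^{\blacktriangle}=\{x\in U\mid R(x)\cap X\neq\emptyset\}$, $X^{\triangledown}=\{x\in U\mid \breve R(x)\subseteq X\}$, $X^{\vartriangle}=\{x\in U\mid \breve R(x)\cap X\neq\emptyset\}$; composites like $X^{\vartriangle\blacktriangledown}$ mean $(X^{\vartriangle})^{\blacktriangledown}$. $\wp(U)^{\blacktriangledown}=\{X^{\blacktriangledown}\mid X\subseteq U\}$, $\wp(U)^{\blacktriangle}=\{X^{\blacktriangle}\mid X\subseteq U\}$, complete lattices under $\subseteq$. $\mathcal S=\{x\in U\mid |R(x)|=1\}$. $\mathrm{RS}=\{(X^{\blacktriangledown},X^{\blacktriangle})\mid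 X\subseteq U\}$ ordered coordinatewise; $\mathrm{DM(RS)}$ is its Dedekind–MacNeille completion, identified with $\{(A,B)\in\wp(U)^{\blacktriangledown}\times\wp(U)^{\blacktriangle}\mid A^{\vartriangle\blacktriangle}\subseteq B,\ A\cap\mathcal S=B\cap\mathcal S\}$ ordered coordinatewise, with meets $\bigwedge_i(X_i,Y_i)=(\bigcap_iX_i,(\bigcap_iY_i)^{\triangledown\blacktriangle})$ and joins $\bigvee_i(X_i,Y_i)=((\bigcup_iX_i)^{\vartriangle\blacktriangledown},\bigcup_iY_i)$. An element $j$ of a complete lattice is completely join-irreducible if $j=\bigvee S$ implies $j\in S$. When $\mathrm{DM(RS)}$ is distributive ($R$ reflexive) it is a Kleene algebra with $\sim(A,B)=(B^c,A^c)$; for a completely join-irreducible $j$ of $\mathrm{DM(RS)}$, $g(j)=\bigwedge\{a\in\mathrm{DM(RS)}\mid a\not\le\sim j\}$. (Under the hypotheses, $(\emptyset,\{x\}^{\blacktriangle})$ and $(\emptyset,\{y\}^{\blacktriangle})$ are completely join-irreducible elements of $\mathrm{DM(RS)}$.) *)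

(* Defs.v *)
From mathcomp Require Import all_boot.
From mathcomp Require Import boolp classical_sets.
Set Implicit Arguments. Unset Strict Implicit. Unset Printing Implicit Defensive.
Local Open Scope classical_set_scope.

Section RoughSets.
Variables (U : Type) (R : U -> U -> Prop).

Definition Rsucc (x : U) : set U := [set y | R x y].
Definition Rpred (x : U) : set U := [set y | R y x].

(* X^{black down}, X^{black up}, X^{white down}, X^{white up} *)
Definition lowB (X : set U) : set U := [set x | Rsucc x `<=` X].
Definition uppB (X : set U) : set U := [set x | Rsucc x `&` X !=set0].
Definition lowW (X : set U) : set U := [set x | Rpred x `<=` X].
Definition uppW (X : set U) : set U := [set x | Rpred x `&` X !=set0].

(* the carriers wp(U)^{black down} and wp(U)^{black up} *)
Definition lowB_image : set (set U) := [set A | exists X, A = lowB X].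
Definition uppB_image : set (set U) := [set A | exists X, A = uppB X].

Definition singR : set U := [set x | exists y, Rsucc x = [set y]].

(* DM(RS), as a set of pairs of subsets of U *)
Definition DMc : set (set U * set U) :=
  [set p | lowB_image p.1 /\ uppB_image p.2 /\
           uppB (uppW p.1) `<=` p.2 /\ p.1 `&` singR = p.2 `&` singR].

Definition dm_le (p q : set U * set U) : Prop := p.1 `<=` q.1 /\ p.2 `<=` q.2.

Definition dm_meet (F : set (set U * set U)) : set U * set U :=
  (\bigcap_(a in F) a.1, uppB (lowW (\bigcap_(a in F) a.2))).
Definition dm_join (F : set (set U * set U)) : set U * set U :=
  (lowB (uppW (\bigcup_(a in F) a.1)), \bigcup_(a in F) a.2).

Definition DM_completely_distributive : Prop :=
  forall (I : Type) (J : I -> Type) (x : forall i, J i -> set U * set U),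
    (forall i j, DMc (x i j)) ->
    dm_meet (range (fun i => dm_join (range (x i)))) =
    dm_join (range (fun f : (forall i, J i) => dm_meet (range (fun i => x i (f i))))).

Definition dm_neg (p : set U * set U) : set U * set U := (~` p.2, ~` p.1).

Definition dm_g (j : set U * set U) : set U * set U :=
  dm_meet [set a | DMc a /\ ~ dm_le a (dm_neg j)].

End RoughSets.

Definition is_lub_in (T : Type) (C : set T) (le : T -> T -> Prop)
  (S : set T) (a : T) : Prop :=
  C a /\ (forall s, S s -> le s a) /\
  (forall b, C b -> (forall s, S s -> le s b) -> le a b).

Definition cji_in (T : Type) (C : set T) (le : T -> T -> Prop) (j : T) : Prop :=
  C j /\ forall S, S `<=` C -> is_lub_in C le S j -> S j.

(* Main.v *)
Require Import Defs.
From mathcomp Require Import all_boot.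
From mathcomp Require Import boolp classical_sets.
Local Open Scope classical_set_scope.
Set Implicit Arguments.

Section H.
Variables (U : Type) (R : U -> U -> Prop) (Hrefl : forall z, R z z).

Lemma uppB1 (x p : U) : uppB R [set x] p <-> R p x.
Proof. split; [by case=> q [Hq Hqx]; rewrite -Hqx | by move=> H; exists x]. Qed.

Lemma singR_succ s r : singR R s -> R s r -> r = s.
Proof.
case=> w Hw Hr.
have H1 : Rsucc R s s := Hrefl s.
have H2 : Rsucc R s r := Hr.
rewrite Hw in H1 H2. by rewrite H2 H1.
Qed.

Definition eB (B : set U) : set U * set U := (B `&` singR R, B).

Lemma eB_DMc B : uppB_image R B -> DMc R (eB B).
Proof.
case=> X ->; rewrite /DMc /eB /=; split; [|split; [|split]].
- exists (uppB R X `&` singR R); apply/seteqP; split=> q /=.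
  + move=> [Hq Hs] r Hr. have -> := singR_succ Hs Hr. by split.
  + move=> H; apply: H; exact: Hrefl.
- by exists X.
- move=> p [r [Hpr [s [Hsr [Hs1 Hs]]]]].
  have Hrs := singR_succ Hs Hsr. subst r.
  case: Hs1 => q [Hq1 Hq2]. have Hqs := singR_succ Hs Hq1. subst q.
  by exists s.
- by rewrite -setIA setIid.
Qed.


Lemma int_sub (W : set U) : uppB R (lowW R W) `<=` W.
Proof. move=> p [v [Hpv Hv]]; exact: Hv. Qed.

Lemma join_prime (HCD : DM_completely_distributive R) (x : U)
  (cj : cji_in (uppB_image R) (fun A B : set U => A `<=` B) (uppB R [set x]))
  (I : Type) (Y : I -> set U) (HY : forall i, uppB_image R (Y i))
  (Hsub : forall p, uppB R [set x] p -> exists i, Y i p) :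
  exists i, uppB R [set x] `<=` Y i.
Proof.
set X := uppB R [set x].
have [i0 _] : exists i, Y i x by apply: Hsub; exists x; split=> //; exact: Hrefl.
pose xx := fun (b : bool) (i : I) => if b then eB X else eB (Y i).
have Hx : forall b i, DMc R (xx b i).
  by move=> [] i; apply: eB_DMc => //; exists [set x].
have H := f_equal snd (@HCD bool (fun _ => I) xx Hx).
pose Z := fun f : bool -> I => uppB R (lowW R (\bigcap_(a in range (fun b => xx b (f b))) a.2)).
have HZ : forall p, X p -> exists f, Z f p.
  move=> p Hp.
  have : (dm_meet R (range (fun b => dm_join R (range (xx b))))).2 p.
    exists x; split; first by case: Hp => q [Hq1 Hq2]; rewrite -Hq2.
    move=> q Hq a [b _ <-]; case: b.
    - rewrite /dm_join /=. exists (xx true i0); first by exists i0.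
      by exists x.
    - rewrite /dm_join /=. have [i Hi] := Hsub q (ex_intro _ x (conj Hq erefl)).
      exists (xx false i); first by exists i.
      exact: Hi.
  rewrite H /= => -[a [f _ <-] Ha]; by exists f.
have [f ->] : [set Z' | exists f, Z' = Z f] X.
  apply: cj.2.
  - by move=> Z' [f ->]; exists (lowW R (\bigcap_(a in range (fun b => xx b (f b))) a.2)).
  - split; first by exists [set x].
    split.
    + move=> Z' [f ->] q Hq.
      have := int_sub Hq; move=> /(_ (xx true (f true))) /=; apply; by exists true.
    + move=> b _ Hb p Hp. have [f Hf] := HZ p Hp. exact: (Hb (Z f) (ex_intro _ f erefl)).
exists (f false) => q Hq.
have := int_sub Hq; move=> /(_ (xx false (f false))) /=; apply; by exists false.
Qed.

Lemma aZ_DMc z : DMc R (lowB R (Rsucc R z), uppB R (Rsucc R z)).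
Proof.
rewrite /DMc /=; split; [by exists (Rsucc R z)|split; [by exists (Rsucc R z)|split]].
- move=> p [q [Hpq [r [Hrq Hr]]]]. exists q; split=> //. exact: Hr.
- apply/seteqP; split=> s [Hs Hss]; split=> //.
  + exists s; split; [exact: Hrefl | exact: Hs; exact: Hrefl].
  + case: Hs => w [Hsw Hzw]. have Hws := singR_succ Hss Hsw. subst w.
    move=> r Hr. by rewrite (singR_succ Hss Hr).
Qed.

Lemma ii_C (x y : U)
  (H : dm_le (set0, uppB R [set x]) (dm_g R (set0, uppB R [set y])))
  t z : R t x -> R z y -> exists w, R t w /\ R z w.
Proof.
move=> Ht Hz.
have [v [Htv Hv]] := H.2 t (ex_intro _ x (conj Ht erefl)).
have := Hv t Htv (lowB R (Rsucc R z), uppB R (Rsucc R z)).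
case=> [|w [H1 H2]]; last by exists w.
split; first exact: aZ_DMc.
move=> [H1 _]. apply: (H1 z) => //=. by exists y.
Qed.

Lemma i_ii (a b u : U) : uppB R [set a] `<=` uppB R [set u] ->
  uppB R [set b] `<=` uppB R [set u] ->
  dm_le (set0, uppB R [set a]) (dm_g R (set0, uppB R [set b])).
Proof.
move=> Ha Hb; split=> //= p Hp.
exists u; split; first by have := Ha p Hp; move/uppB1.
move=> q Hq a' [Ha'1 Ha'2].
case: (pselect (exists z, a'.1 z /\ uppB R [set b] z)) => [[z [Hz1 Hz2]]|Hn].
- apply: Ha'1.2.2.1. exists u; split=> //. exists z; split=> //.
  have := Hb z Hz2; by move/uppB1.
- exfalso; apply: Ha'2; split=> r Hr //= Hr2. apply: Hn; by exists r.
Qed.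

End H.

Unset Implicit Arguments.
Theorem mainTheorem12 (U : Type) (R : U -> U -> Prop)
  (Hrefl : forall z, R z z)
  (HCD : DM_completely_distributive R)
  (x y : U) (hx : ~ singR R x) (hy : ~ singR R y)
  (cjx : cji_in (uppB_image R) (fun A B : set U => A `<=` B) (uppB R [set x]))
  (cjy : cji_in (uppB_image R) (fun A B : set U => A `<=` B) (uppB R [set y])) :
  (exists u : U, uppB R [set x] `<=` uppB R [set u] /\
                 uppB R [set y] `<=` uppB R [set u]) <->
  (dm_le (set0, uppB R [set x]) (dm_g R (set0, uppB R [set x])) /\
   dm_le (set0, uppB R [set x]) (dm_g R (set0, uppB R [set y])) /\
   dm_le (set0, uppB R [set y]) (dm_g R (set0, uppB R [set x])) /\
   dm_le (set0, uppB R [set y]) (dm_g R (set0, uppB R [set y]))).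
Proof.
split.
- case=> u [Hx Hy]; split; [|split; [|split]]; exact: (i_ii (u:=u)).
- case=> _ [H _].
  have step1 : forall z, R z y -> exists u, R z u /\ uppB R [set x] `<=` uppB R [set u].
    move=> z Hz.
    have [[u Hzu] Hu] := @join_prime U R Hrefl HCD x cjx {u | R z u}
      (fun i => uppB R [set proj1_sig i]) (fun i => ex_intro _ _ erefl)
      (fun t Ht => let: ex_intro w (conj H1 H2) :=
          ii_C Hrefl H t z (proj1 (uppB1 R x t) Ht) Hz in
        ex_intro _ (exist _ w H2) (proj2 (uppB1 R w t) H1)).
    by exists u.
  have [[u Hu] Hyu] := @join_prime U R Hrefl HCD y cjy
      {u | uppB R [set x] `<=` uppB R [set u]}
      (fun i => uppB R [set proj1_sig i]) (fun i => ex_intro _ _ erefl)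
      (fun z Hz => let: ex_intro w (conj H1 H2) :=
          step1 z (proj1 (uppB1 R y z) Hz) in
        ex_intro _ (exist _ w H2) (proj2 (uppB1 R w z) H1)).
  by exists u.
Qed.
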